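(* For every positive integer $m$ there is no homomorphism $\mathrm{KG}(6,2)\to S_m$.
   Context: $\mathrm{KG}(6,2)$ is the Kneser graph whose vertices are the $2$-element subsets of $\{1,\dots,6\}$, two being adjacent iff disjoint. The symmetric shift graph $S_m$ has vertex set $\{(i,j):1\le i,j\le m,\ i\ne j\}$, and $(i,j)$ is adjacent to $(k,\ell)$ iff $j=k$ or $i=\ell$. A homomorphism is an edge-preserving map between vertex sets. *)

(* Defs.v *)
From mathcomp Require Import all_boot.
Set Implicit Arguments. Unset Strict Implicit. Unset Printing Implicit Defensive.

(* Kneser graph KG(n,k): vertices are k-subsets of {1..n} (here 'I_n),
   adjacent iff disjoint. *)
Definition KG_vertex (n k : nat) := {A : {set 'I_n} | #|A| == k}.
Definition KG_adj (n k : nat) (A B : KG_vertex n k) : bool :=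
  [disjoint (val A) & (val B)].

(* Symmetric shift graph S_m: vertices are ordered pairs (i,j) of distinct
   elements of {1..m} (here 'I_m); (i,j) ~ (k,l) iff j = k or i = l. *)
Definition shift_vertex (m : nat) := {p : 'I_m * 'I_m | p.1 != p.2}.
Definition shift_adj (m : nat) (u v : shift_vertex m) : bool :=
  ((val u).2 == (val v).1) || ((val u).1 == (val v).2).

Definition is_hom (V W : Type) (adjV : V -> V -> bool) (adjW : W -> W -> bool)
  (f : V -> W) : Prop :=
  forall x y, adjV x y -> adjW (f x) (f y).

(* Main.v *)
Require Import Defs.
From mathcomp Require Import all_boot.
Definition o (k : nat) (h : k < 6) : 'I_6 := Ordinal h.
Lemma card2 (a b : 'I_6) : a != b -> #|[set a; b]| == 2.
Proof. by move=> h; rewrite cards2 h. Qed.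
Definition vx (i j : nat) (hi : i < 6) (hj : j < 6) (h : o i hi != o j hj) : KG_vertex 6 2 :=
  exist _ [set o i hi; o j hj] (@card2 _ _ h).
Lemma disj4 (a b c d : 'I_6) : a != c -> a != d -> b != c -> b != d -> [disjoint [set a; b] & [set c; d]].
Proof.
move=> ac ad bc bd; apply/pred0P=> x /=; rewrite !inE; apply/negP => /andP[/orP[]/eqP-> /orP[]/eqP E].
all: subst; by rewrite ?eqxx in ac ad bc bd.
Qed.
Definition v01 := @vx 0 1 erefl erefl erefl.
Definition v02 := @vx 0 2 erefl erefl erefl.
Definition v03 := @vx 0 3 erefl erefl erefl.
Definition v04 := @vx 0 4 erefl erefl erefl.
Definition v05 := @vx 0 5 erefl erefl erefl.
Definition v12 := @vx 1 2 erefl erefl erefl.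
Definition v13 := @vx 1 3 erefl erefl erefl.
Definition v14 := @vx 1 4 erefl erefl erefl.
Definition v15 := @vx 1 5 erefl erefl erefl.
Definition v23 := @vx 2 3 erefl erefl erefl.
Definition v24 := @vx 2 4 erefl erefl erefl.
Definition v25 := @vx 2 5 erefl erefl erefl.
Definition v34 := @vx 3 4 erefl erefl erefl.
Definition v35 := @vx 3 5 erefl erefl erefl.
Definition v45 := @vx 4 5 erefl erefl erefl.

Lemma cyc m (u v w : shift_vertex m) :
  shift_adj u v -> shift_adj v w -> shift_adj u w ->
  ((val u).2 = (val v).1 /\ (val v).2 = (val w).1 /\ (val w).2 = (val u).1) \/
  ((val v).2 = (val u).1 /\ (val w).2 = (val v).1 /\ (val u).2 = (val w).1).
Proof.
case: u => [[a b] ab]; case: v => [[c d] cd]; case: w => [[e g] eg].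
rewrite /shift_adj /=; move: ab cd eg => /= /eqP ab /eqP cd /eqP eg.
case/orP=> /eqP h1; case/orP=> /eqP h2; case/orP=> /eqP h3;
  first [left; split; [|split]; congruence | right; split; [|split]; congruence | exfalso; congruence].
Qed.

Theorem mainTheorem5 (m : nat) (hm : 0 < m) :
  ~ exists f : KG_vertex 6 2 -> shift_vertex m,
      is_hom (@KG_adj 6 2) (@shift_adj m) f.
Proof.
case=> f hom.
pose t X := (val (f X)).1. pose h X := (val (f X)).2.
have nd X : t X <> h X.
  by move=> E; move: (valP (f X)); rewrite /t /h in E; rewrite E eqxx.
have C P Q R : KG_adj P Q -> KG_adj Q R -> KG_adj P R ->
  (h P = t Q /\ h Q = t R /\ h R = t P) \/ (h Q = t P /\ h R = t Q /\ h P = t R).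
  by move=> pq qr pr; apply: cyc; apply: hom.
clearbody t h.
have n01 := nd v01.
have n02 := nd v02.
have n03 := nd v03.
have n04 := nd v04.
have n05 := nd v05.
have n12 := nd v12.
have n13 := nd v13.
have n14 := nd v14.
have n15 := nd v15.
have n23 := nd v23.
have n24 := nd v24.
have n25 := nd v25.
have n34 := nd v34.
have n35 := nd v35.
have n45 := nd v45.
clear nd.
case: (C v02 v13 v45 ltac:(exact: disj4) ltac:(exact: disj4) ltac:(exact: disj4)) => [[a0 [b0 c0]]|[a0 [b0 c0]]]; try congruence.
all: case: (C v04 v15 v23 ltac:(exact: disj4) ltac:(exact: disj4) ltac:(exact: disj4)) => [[a1 [b1 c1]]|[a1 [b1 c1]]]; try congruence.
all: case: (C v04 v13 v25 ltac:(exact: disj4) ltac:(exact: disj4) ltac:(exact: disj4)) => [[a2 [b2 c2]]|[a2 [b2 c2]]]; try congruence.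
all: case: (C v02 v15 v34 ltac:(exact: disj4) ltac:(exact: disj4) ltac:(exact: disj4)) => [[a3 [b3 c3]]|[a3 [b3 c3]]]; try congruence.
all: case: (C v01 v25 v34 ltac:(exact: disj4) ltac:(exact: disj4) ltac:(exact: disj4)) => [[a4 [b4 c4]]|[a4 [b4 c4]]]; try congruence.
all: case: (C v01 v24 v35 ltac:(exact: disj4) ltac:(exact: disj4) ltac:(exact: disj4)) => [[a5 [b5 c5]]|[a5 [b5 c5]]]; try congruence.
all: case: (C v02 v14 v35 ltac:(exact: disj4) ltac:(exact: disj4) ltac:(exact: disj4)) => [[a6 [b6 c6]]|[a6 [b6 c6]]]; try congruence.
all: case: (C v03 v15 v24 ltac:(exact: disj4) ltac:(exact: disj4) ltac:(exact: disj4)) => [[a7 [b7 c7]]|[a7 [b7 c7]]]; try congruence.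
all: case: (C v03 v12 v45 ltac:(exact: disj4) ltac:(exact: disj4) ltac:(exact: disj4)) => [[a8 [b8 c8]]|[a8 [b8 c8]]]; try congruence.
all: case: (C v05 v13 v24 ltac:(exact: disj4) ltac:(exact: disj4) ltac:(exact: disj4)) => [[a9 [b9 c9]]|[a9 [b9 c9]]]; try congruence.
all: case: (C v01 v23 v45 ltac:(exact: disj4) ltac:(exact: disj4) ltac:(exact: disj4)) => [[a10 [b10 c10]]|[a10 [b10 c10]]]; try congruence.
all: case: (C v03 v14 v25 ltac:(exact: disj4) ltac:(exact: disj4) ltac:(exact: disj4)) => [[a11 [b11 c11]]|[a11 [b11 c11]]]; try congruence.
all: case: (C v05 v14 v23 ltac:(exact: disj4) ltac:(exact: disj4) ltac:(exact: disj4)) => [[a12 [b12 c12]]|[a12 [b12 c12]]]; try congruence.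
all: case: (C v05 v12 v34 ltac:(exact: disj4) ltac:(exact: disj4) ltac:(exact: disj4)) => [[a13 [b13 c13]]|[a13 [b13 c13]]]; try congruence.
all: case: (C v04 v12 v35 ltac:(exact: disj4) ltac:(exact: disj4) ltac:(exact: disj4)) => [[a14 [b14 c14]]|[a14 [b14 c14]]]; try congruence.
Qed.
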